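(* For any set $\Phi\cup\{\psi\}$ of $\mathsf{BSML}^{\oslash}$-formulas, if $\Phi\vdash\psi$ in the natural deduction system $\mathcal{S}^{\oslash}$ described below, then $\Phi\models\psi$.
   Context: Syntax: $\mathsf{BSML}^{\oslash}$-formulas $\phi ::= p \mid \neg\phi \mid (\phi\wedge\phi) \mid (\phi\vee\phi) \mid \Diamond\phi \mid \mathrm{NE}\mid\oslash\phi$. Classical formulas ($\alpha,\beta$): built from $p,\neg,\wedge,\vee,\Diamond$. $\Box\phi:=\neg\Diamond\neg\phi$; $\bot:=p\wedge\neg p$; $\bot\!\!\!\bot:=\bot\wedge\mathrm{NE}$. Semantics on Kripke models $M=(W,R,V)$, states $s\subseteq W$: $s\models p$ iff $s\subseteq V(p)$; $s\dashv p$ iff $s\cap V(p)=\emptyset$; $s\models\mathrm{NE}$ iff $s\ne\emptyset$; $s\dashv\mathrm{NE}$ iff $s=\emptyset$; $s\models\neg\phi$ iff $s\dashv\phi$; $s\dashv\neg\phi$ iff $s\models\phi$; $s\models\phi\wedge\psi$ iff both; $s\dashv\phi\wedge\psi$ iff $s=t\cup u$, $t\dashv\phi$, $u\dashv\psi$; $s\models\phi\vee\psi$ iff $s=t\cup u$, $t\models\phi$, $u\models\psi$; $s\dashv\phi\vee\psi$ iff $s\dashv\phi$ and $s\dashv\psi$; $s\models\Diamond\phi$ iff each $w\in s$ has a nonempty $t\subseteq R[w]$ with $t\models\phi$; $s\dashv\Diamond\phi$ iff $R[w]\dashv\phi$ for all $w\in s$; $s\models\oslash\phi$ iff $s\models\phi$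 or $s=\emptyset$; $s\dashv\oslash\phi$ iff $s\dashv\phi$. $\Phi\models\psi$ iff every state supporting all of $\Phi$ supports $\psi$. An occurrence $[\psi]$ of a subformula in $\phi$ is called distributive if it is not within the scope of any $\neg$ or $\Diamond$ in $\phi$ (recall $\Box=\neg\Diamond\neg$); $\phi[\chi/\psi]$ denotes replacing that occurrence by $\chi$. System $\mathcal{S}^{\oslash}$ ($\Phi\vdash\psi$ iff some natural deduction derivation of $\psi$ has all undischarged assumptions in $\Phi$; ''$A\Leftrightarrow B$'' = both one-step rules): (a) $\wedge$I; $\wedge$E. (b) $\neg$I: from a derivation of $\bot$ from $\alpha$ infer $\neg\alpha$ discharging $\alpha$, provided its undischarged assumptions contain no $\mathrm{NE}$; from $\alpha,\neg\alpha$ infer $\beta$; $\neg\neg\phi\Leftrightarrow\phi$; $\neg(\phi\wedge\psi)\Leftrightarrow\neg\phi\vee\neg\psi$; $\neg(\phi\vee\psi)\Leftrightarrow\neg\phi\wedge\neg\psi$; $\neg\mathrm{NE}\Leftrightarrow\bot$. (c) from $\phi$ infer $\phi\vee\psi$ if $\psi$ contains no $\mathrm{NE}$; from $\phi$ infer $\phi\vee\phi$; from $\phi\vee\psi$ infer $\psi\vee\phi$; $\vee$E: from $\phi\vee\psi$ and derivations of $\chi$ from $\phi$ and from $\psi$ infer $\chi$ (discharging), provided the undischarged assumptions of the subderivations contain no $\mathrm{NE}$; from $\phi\vee\psi$ and a derivation of $\chi$ from $\psi$ whose undischarged assumptions contain no $\mathrm{NE}$ infer $\phi\vee\chi$. (d)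 from $\bot\vee\phi$ infer $\phi$; from $\bot\!\!\!\bot\vee\phi$ infer any $\psi$. (e) if $\psi$ derivable from $\phi$ alone, from $\Diamond\phi$ infer $\Diamond\psi$; if $\psi$ derivable from $\phi_1,\dots,\phi_n$ alone, from $\Box\phi_1,\dots,\Box\phi_n$ infer $\Box\psi$; $\neg\Diamond\phi\Leftrightarrow\Box\neg\phi$. (f) from $\Diamond(\phi\vee(\psi\wedge\mathrm{NE}))$ infer $\Diamond\psi$; from $\Diamond\phi,\Diamond\psi$ infer $\Diamond(\phi\vee\psi)$; from $\Box(\phi\wedge\mathrm{NE})$ infer $\Diamond\phi$; from $\Box\phi,\Diamond\psi$ infer $\Box(\phi\vee\psi)$. ($\oslash$) axiom $\oslash\mathrm{NE}$; from $\bot$ infer $\oslash\phi$; from $\phi$ infer $\oslash\phi$; $\oslash$E: for a distributive occurrence $[\oslash\psi]$ in $\phi$, from $\phi$, a derivation of $\chi$ from $\phi[\psi/\oslash\psi]$ and a derivation of $\chi$ from $\phi[\bot/\oslash\psi]$, infer $\chi$ (discharging); $\neg\oslash\phi\Leftrightarrow\neg\phi$; for a distributive occurrence $[\oslash\psi]$ in $\phi$: from $\Diamond\phi$ infer $\Diamond\phi[\psi/\oslash\psi]\vee\Diamond\phi[\bot/\oslash\psi]$, and from $\Box\phi$ infer $\Box\phi[\psi/\oslash\psi]\vee\Box\phi[\bot/\oslash\psi]$. *)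

(* Defs.v *)
From Stdlib Require Import List.
Import ListNotations.

Inductive form : Type :=
| Atom (p : nat)
| Neg (φ : form)
| And (φ ψ : form)
| Or (φ ψ : form)
| Dia (φ : form)
| NE
| Osl (φ : form).

Definition Box (φ : form) : form := Neg (Dia (Neg φ)).
Definition Bot : form := And (Atom 0) (Neg (Atom 0)).
Definition BBot : form := And Bot NE.

Fixpoint classical (φ : form) : Prop :=
  match φ with
  | Atom _ => True
  | Neg a => classical a
  | And a b => classical a /\ classical b
  | Or a b => classical a /\ classical b
  | Dia a => classical a
  | NE => False
  | Osl _ => False
  end.

Fixpoint NEfree (φ : form) : Prop :=
  match φ with
  | Atom _ => True
  | Neg a => NEfree a
  | And a b => NEfree a /\ NEfree b
  | Or a b => NEfree a /\ NEfree b
  | Dia a => NEfree a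
  | NE => False
  | Osl a => NEfree a
  end.

Record model : Type := Model {
  W : Type;
  R : W -> W -> Prop;
  V : nat -> W -> Prop
}.

Fixpoint supp (M : model) (s : W M -> Prop) (φ : form) {struct φ} : Prop :=
  match φ with
  | Atom p => forall w, s w -> V M p w
  | Neg a => anti M s a
  | And a b => supp M s a /\ supp M s b
  | Or a b => exists t u : W M -> Prop,
      (forall w, s w <-> t w \/ u w) /\ supp M t a /\ supp M u b
  | Dia a => forall w, s w ->
      exists t : W M -> Prop, (exists v, t v) /\ (forall v, t v -> R M w v) /\ supp M t a
  | NE => exists w, s w
  | Osl a => supp M s a \/ (forall w, ~ s w)
  end
with anti (M : model) (s : W M -> Prop) (φ : form) {struct φ} : Prop :=
  match φ with
  | Atom p => forall w, s w -> ~ V M p w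
  | Neg a => supp M s a
  | And a b => exists t u : W M -> Prop,
      (forall w, s w <-> t w \/ u w) /\ anti M t a /\ anti M u b
  | Or a b => anti M s a /\ anti M s b
  | Dia a => forall w, s w -> anti M (R M w) a
  | NE => forall w, ~ s w
  | Osl a => anti M s a
  end.

Definition entails (Φ : form -> Prop) (ψ : form) : Prop :=
  forall (M : model) (s : W M -> Prop),
    (forall φ, Φ φ -> supp M s φ) -> supp M s ψ.

(** * Distributive occurrences
    A distributive context is a formula with one hole that is not in the
    scope of any ¬ or ◇; filling the hole with χ gives φ[χ/ψ] where ψ is the
    occurrence at the hole. *)
Inductive dctx : Type :=
| Hole
| CAndL (C : dctx) (ψ : form)
| CAndR (ψ : form) (C : dctx)
| COrL (C : dctx) (ψ : form)
| COrR (ψ : form) (C : dctx)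
| COsl (C : dctx).

Fixpoint fill (C : dctx) (χ : form) : form :=
  match C with
  | Hole => χ
  | CAndL C' ψ => And (fill C' χ) ψ
  | CAndR ψ C' => And ψ (fill C' χ)
  | COrL C' ψ => Or (fill C' χ) ψ
  | COrR ψ C' => Or ψ (fill C' χ)
  | COsl C' => Osl (fill C' χ)
  end.

(** * The natural deduction system S^⊘
    [Der Γ φ] : there is a derivation of φ all of whose undischarged
    assumptions belong to Γ (sequent-style presentation). Side conditions
    "the undischarged assumptions of the subderivation contain no NE" are
    expressed by requiring the subderivation to use only assumptions from an
    NE-free set Δ ⊆ Γ (plus the discharged formula(s)). *)
Definition ctx_add (Γ : form -> Prop) (a : form) : form -> Prop :=
  fun x => Γ x \/ x = a.
Definition ctx_sub (Δ Γ : form -> Prop) : Prop := forall x, Δ x -> Γ x.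
Definition ctx_NEfree (Δ : form -> Prop) : Prop := forall x, Δ x -> NEfree x.

Inductive Der : (form -> Prop) -> form -> Prop :=
| D_hyp Γ φ : Γ φ -> Der Γ φ
| D_andI Γ φ ψ : Der Γ φ -> Der Γ ψ -> Der Γ (And φ ψ)
| D_andE1 Γ φ ψ : Der Γ (And φ ψ) -> Der Γ φ
| D_andE2 Γ φ ψ : Der Γ (And φ ψ) -> Der Γ ψ
| D_negI Γ Δ α : classical α -> ctx_sub Δ Γ -> ctx_NEfree Δ ->
    Der (ctx_add Δ α) Bot -> Der Γ (Neg α)
| D_negE Γ α β : classical α -> classical β ->
    Der Γ α -> Der Γ (Neg α) -> Der Γ β
| D_dneI Γ φ : Der Γ φ -> Der Γ (Neg (Neg φ))
| D_dneE Γ φ : Der Γ (Neg (Neg φ)) -> Der Γ φ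
| D_dmAnd1 Γ φ ψ : Der Γ (Neg (And φ ψ)) -> Der Γ (Or (Neg φ) (Neg ψ))
| D_dmAnd2 Γ φ ψ : Der Γ (Or (Neg φ) (Neg ψ)) -> Der Γ (Neg (And φ ψ))
| D_dmOr1 Γ φ ψ : Der Γ (Neg (Or φ ψ)) -> Der Γ (And (Neg φ) (Neg ψ))
| D_dmOr2 Γ φ ψ : Der Γ (And (Neg φ) (Neg ψ)) -> Der Γ (Neg (Or φ ψ))
| D_negNE1 Γ : Der Γ (Neg NE) -> Der Γ Bot
| D_negNE2 Γ : Der Γ Bot -> Der Γ (Neg NE)
| D_orI Γ φ ψ : NEfree ψ -> Der Γ φ -> Der Γ (Or φ ψ)
| D_orDup Γ φ : Der Γ φ -> Der Γ (Or φ φ)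
| D_orComm Γ φ ψ : Der Γ (Or φ ψ) -> Der Γ (Or ψ φ)
| D_orE Γ Δ φ ψ χ : ctx_sub Δ Γ -> ctx_NEfree Δ ->
    Der Γ (Or φ ψ) -> Der (ctx_add Δ φ) χ -> Der (ctx_add Δ ψ) χ -> Der Γ χ
| D_orMon Γ Δ φ ψ χ : ctx_sub Δ Γ -> ctx_NEfree Δ ->
    Der Γ (Or φ ψ) -> Der (ctx_add Δ ψ) χ -> Der Γ (Or φ χ)
| D_botOr Γ φ : Der Γ (Or Bot φ) -> Der Γ φ
| D_bbotOr Γ φ ψ : Der Γ (Or BBot φ) -> Der Γ ψ
| D_diaMon Γ φ ψ : Der (fun x => x = φ) ψ -> Der Γ (Dia φ) -> Der Γ (Dia ψ)
| D_boxMon Γ (l : list form) ψ : Der (fun x => In x l) ψ ->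
    (forall φ, In φ l -> Der Γ (Box φ)) -> Der Γ (Box ψ)
| D_negDia1 Γ φ : Der Γ (Neg (Dia φ)) -> Der Γ (Box (Neg φ))
| D_negDia2 Γ φ : Der Γ (Box (Neg φ)) -> Der Γ (Neg (Dia φ))
| D_diaSep Γ φ ψ : Der Γ (Dia (Or φ (And ψ NE))) -> Der Γ (Dia ψ)
| D_diaJoin Γ φ ψ : Der Γ (Dia φ) -> Der Γ (Dia ψ) -> Der Γ (Dia (Or φ ψ))
| D_boxDia Γ φ : Der Γ (Box (And φ NE)) -> Der Γ (Dia φ)
| D_boxInst Γ φ ψ : Der Γ (Box φ) -> Der Γ (Dia ψ) -> Der Γ (Box (Or φ ψ))
| D_oslNE Γ : Der Γ (Osl NE)
| D_oslBot Γ φ : Der Γ Bot -> Der Γ (Osl φ)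
| D_oslI Γ φ : Der Γ φ -> Der Γ (Osl φ)
| D_oslE Γ (C : dctx) ψ χ : Der Γ (fill C (Osl ψ)) ->
    Der (ctx_add Γ (fill C ψ)) χ -> Der (ctx_add Γ (fill C Bot)) χ -> Der Γ χ
| D_negOsl1 Γ φ : Der Γ (Neg (Osl φ)) -> Der Γ (Neg φ)
| D_negOsl2 Γ φ : Der Γ (Neg φ) -> Der Γ (Neg (Osl φ))
| D_diaOsl Γ (C : dctx) ψ : Der Γ (Dia (fill C (Osl ψ))) ->
    Der Γ (Or (Dia (fill C ψ)) (Dia (fill C Bot)))
| D_boxOsl Γ (C : dctx) ψ : Der Γ (Box (fill C (Osl ψ))) ->
    Der Γ (Or (Box (fill C ψ)) (Box (fill C Bot))).

(* Main.v *)
Require Import Defs.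
From Stdlib Require Import List Classical.
Import ListNotations.

Lemma ext_lem M φ : forall s s' : W M -> Prop, (forall w, s w <-> s' w) ->
  (supp M s φ -> supp M s' φ) /\ (anti M s φ -> anti M s' φ).
Proof.
  induction φ; intros s s' E; simpl.
  - split; intros H w Hw; apply H, E, Hw.
  - destruct (IHφ s s' E); tauto.
  - destruct (IHφ1 s s' E), (IHφ2 s s' E); split.
    + tauto.
    + intros (t & u & Htu & A & B); exists t, u; split; [|tauto].
      intro w; rewrite <- E; apply Htu.
  - destruct (IHφ1 s s' E), (IHφ2 s s' E); split.
    + intros (t & u & Htu & A & B); exists t, u; split; [|tauto].
      intro w; rewrite <- E; apply Htu.
    + tauto.
  - split; intros H w Hw; apply H, E, Hw.
  - split.
    + intros [w Hw]; exists w; apply E, Hw.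
    + intros H w Hw; apply (H w), E, Hw.
  - destruct (IHφ s s' E); split; [|tauto].
    intros [A|A]; [left; tauto|right; intros w Hw; apply (A w), E, Hw].
Qed.

Lemma empty_lem M φ : NEfree φ -> forall s : W M -> Prop, (forall w, ~ s w) ->
  supp M s φ /\ anti M s φ.
Proof.
  induction φ; intros HN s E; simpl in *.
  - split; intros w Hw; exfalso; apply (E w Hw).
  - destruct (IHφ HN s E); tauto.
  - destruct HN as [H1 H2]; destruct (IHφ1 H1 s E), (IHφ2 H2 s E); split; [tauto|].
    exists s, s; split; [firstorder|tauto].
  - destruct HN as [H1 H2]; destruct (IHφ1 H1 s E), (IHφ2 H2 s E); split; [|tauto].
    exists s, s; split; [firstorder|tauto].
  - split; intros w Hw; exfalso; apply (E w Hw).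
  - contradiction.
  - destruct (IHφ HN s E); tauto.
Qed.

Lemma down_lem M φ : NEfree φ -> forall s t : W M -> Prop, (forall w, t w -> s w) ->
  (supp M s φ -> supp M t φ) /\ (anti M s φ -> anti M t φ).
Proof.
  induction φ; intros HN s t E; simpl in *.
  - split; intros H w Hw; apply H, E, Hw.
  - destruct (IHφ HN s t E); tauto.
  - destruct HN as [H1 H2]; destruct (IHφ1 H1 s t E), (IHφ2 H2 s t E); split; [tauto|].
    intros (t1 & u1 & Htu & A & B).
    exists (fun w => t w /\ t1 w), (fun w => t w /\ u1 w); split.
    + intro w; split; [intro Hw; destruct (proj1 (Htu w) (E w Hw)); tauto|tauto].
    + split; [apply (proj2 (IHφ1 H1 t1 _ (fun w H => proj2 H)))|
              apply (proj2 (IHφ2 H2 u1 _ (fun w H => proj2 H)))]; tauto.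
  - destruct HN as [H1 H2]; destruct (IHφ1 H1 s t E), (IHφ2 H2 s t E); split; [|tauto].
    intros (t1 & u1 & Htu & A & B).
    exists (fun w => t w /\ t1 w), (fun w => t w /\ u1 w); split.
    + intro w; split; [intro Hw; destruct (proj1 (Htu w) (E w Hw)); tauto|tauto].
    + split; [apply (proj1 (IHφ1 H1 t1 _ (fun w H => proj2 H)))|
              apply (proj1 (IHφ2 H2 u1 _ (fun w H => proj2 H)))]; tauto.
  - split; intros H w Hw; apply H, E, Hw.
  - contradiction.
  - destruct (IHφ HN s t E); split; [|tauto].
    intros [A|A]; [left; tauto|right; intros w Hw; apply (A w), E, Hw].
Qed.

Lemma union_lem M φ : forall s s1 s2 : W M -> Prop, (forall w, s w <-> s1 w \/ s2 w) ->
  (supp M s1 φ -> supp M s2 φ -> supp M s φ) /\ (anti M s1 φ -> anti M s2 φ -> anti M s φ).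
Proof.
  induction φ; intros s s1 s2 E; simpl.
  - split; intros H1 H2 w Hw; destruct (proj1 (E w) Hw); auto.
  - destruct (IHφ s s1 s2 E); tauto.
  - destruct (IHφ1 s s1 s2 E), (IHφ2 s s1 s2 E); split; [tauto|].
    intros (t1 & u1 & Htu1 & A1 & B1) (t2 & u2 & Htu2 & A2 & B2).
    exists (fun w => t1 w \/ t2 w), (fun w => u1 w \/ u2 w); split.
    + intro w; rewrite E, Htu1, Htu2; tauto.
    + split; [apply (proj2 (IHφ1 _ t1 t2 (fun w => iff_refl _)))|
              apply (proj2 (IHφ2 _ u1 u2 (fun w => iff_refl _)))]; auto.
  - destruct (IHφ1 s s1 s2 E), (IHφ2 s s1 s2 E); split; [|tauto].
    intros (t1 & u1 & Htu1 & A1 & B1) (t2 & u2 & Htu2 & A2 & B2).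
    exists (fun w => t1 w \/ t2 w), (fun w => u1 w \/ u2 w); split.
    + intro w; rewrite E, Htu1, Htu2; tauto.
    + split; [apply (proj1 (IHφ1 _ t1 t2 (fun w => iff_refl _)))|
              apply (proj1 (IHφ2 _ u1 u2 (fun w => iff_refl _)))]; auto.
  - split; intros H1 H2 w Hw; destruct (proj1 (E w) Hw); auto.
  - split.
    + intros [w Hw] _; exists w; apply E; auto.
    + intros H1 H2 w Hw; destruct (proj1 (E w) Hw); [apply (H1 w)|apply (H2 w)]; auto.
  - destruct (IHφ s s1 s2 E) as [A B]; split; [|tauto].
    intros [H1|H1] [H2|H2].
    + left; auto.
    + left; apply (proj1 (ext_lem M φ s1 s (fun w => conj (fun h => proj2 (E w) (or_introl h)) (fun h => match proj1 (E w) h with or_introl a => a | or_intror b => False_ind _ (H2 w b) end)))); auto.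
    + left; apply (proj1 (ext_lem M φ s2 s (fun w => conj (fun h => proj2 (E w) (or_intror h)) (fun h => match proj1 (E w) h with or_intror a => a | or_introl b => False_ind _ (H1 w b) end)))); auto.
    + right; intros w Hw; destruct (proj1 (E w) Hw); [eapply H1|eapply H2]; eauto.
Qed.

Fixpoint tr (M : model) (w : W M) (φ : form) : Prop :=
  match φ with
  | Atom p => V M p w
  | Neg a => ~ tr M w a
  | And a b => tr M w a /\ tr M w b
  | Or a b => tr M w a \/ tr M w b
  | Dia a => exists v, R M w v /\ tr M v a
  | _ => False
  end.

Lemma tr_lem M φ : classical φ -> forall s : W M -> Prop,
  (supp M s φ <-> forall w, s w -> tr M w φ) /\ (anti M s φ <-> forall w, s w -> ~ tr M w φ).
Proof.
  induction φ; intros HC s; simpl in *.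
  - tauto.
  - destruct (IHφ HC s) as [A B]; split; [exact B|].
    rewrite A; split; intros H w Hw; [auto|apply NNPP; auto].
  - destruct HC as [H1 H2]; destruct (IHφ1 H1 s) as [A1 B1], (IHφ2 H2 s) as [A2 B2].
    rewrite A1, A2; split; [firstorder|]. split.
    + intros (t & u & Htu & At & Bu) w Hw [T1 T2].
      destruct (proj1 (Htu w) Hw) as [X|X];
      [apply (proj1 (proj2 (IHφ1 H1 t)) At w X T1)|apply (proj1 (proj2 (IHφ2 H2 u)) Bu w X T2)].
    + intros H. exists (fun w => s w /\ ~ tr M w φ1), (fun w => s w /\ ~ tr M w φ2).
      split; [intro w; split; [intro Hw; specialize (H w Hw); tauto|tauto]|].
      split; [apply (proj2 (proj2 (IHφ1 H1 _)))|apply (proj2 (proj2 (IHφ2 H2 _)))]; tauto.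
  - destruct HC as [H1 H2]; destruct (IHφ1 H1 s) as [A1 B1], (IHφ2 H2 s) as [A2 B2].
    rewrite B1, B2; split; [|firstorder]. split.
    + intros (t & u & Htu & At & Bu) w Hw.
      destruct (proj1 (Htu w) Hw) as [X|X];
      [left; apply (proj1 (proj1 (IHφ1 H1 t)) At w X)|right; apply (proj1 (proj1 (IHφ2 H2 u)) Bu w X)].
    + intros H. exists (fun w => s w /\ tr M w φ1), (fun w => s w /\ tr M w φ2).
      split; [intro w; split; [intro Hw; specialize (H w Hw); tauto|tauto]|].
      split; [apply (proj2 (proj1 (IHφ1 H1 _)))|apply (proj2 (proj1 (IHφ2 H2 _)))]; tauto.
  - split; split.
    + intros H w Hw; destruct (H w Hw) as (t & [v Hv] & Ht & St).
      exists v; split; [auto|]. apply (proj1 (proj1 (IHφ HC t)) St v Hv).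
    + intros H w Hw; destruct (H w Hw) as (v & Rv & Tv).
      exists (fun x => x = v); split; [eauto|split; [intros x ->; auto|]].
      apply (proj2 (proj1 (IHφ HC _))); intros x ->; auto.
    + intros H w Hw (v & Rv & Tv). apply (proj1 (proj2 (IHφ HC _)) (H w Hw) v Rv Tv).
    + intros H w Hw. apply (proj2 (proj2 (IHφ HC _))). intros v Rv Tv. apply (H w Hw). eauto.
  - contradiction.
  - contradiction.
Qed.

Lemma fill_lem M C ψ : forall s : W M -> Prop,
  supp M s (fill C (Osl ψ)) -> supp M s (fill C ψ) \/ supp M s (fill C Bot).
Proof.
  induction C; intros s H; simpl in *.
  - destruct H as [H|H]; [left; auto|right; split; intros w Hw; exfalso; eapply H; eauto].
  - destruct H as [A B]; destruct (IHC s A); [left|right]; tauto.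
  - destruct H as [A B]; destruct (IHC s B); [left|right]; tauto.
  - destruct H as (t & u & E & A & B); destruct (IHC t A); [left|right]; exists t, u; tauto.
  - destruct H as (t & u & E & A & B); destruct (IHC u B); [left|right]; exists t, u; tauto.
  - destruct H as [H|H]; [destruct (IHC s H); [left|right]; left; auto|left; right; auto].
Qed.

Lemma bot_lem M (s : W M -> Prop) : supp M s Bot <-> forall w, ~ s w.
Proof.
  simpl; split; [intros [A B] w Hw; apply (B w Hw (A w Hw))|intro H; split; intros w Hw; exfalso; eapply H; eauto].
Qed.

Theorem theorem4p25 (Φ : form -> Prop) (ψ : form) :
  Der Φ ψ -> entails Φ ψ.
Proof.
  unfold entails.
  induction 1; intros M s HΓ.
  - auto.
  - simpl; split; auto.
  - apply (IHDer M s HΓ).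
  - apply (IHDer M s HΓ).
  -
    change (anti M s α). apply (proj2 (proj2 (tr_lem M α H s))).
    intros w Hw Tw.
    assert (Hb : supp M (fun x => x = w) Bot).
    { apply IHDer. intros x [Dx| ->].
      - apply (proj1 (down_lem M x (H1 x Dx) s _ (fun v e => eq_ind_r s Hw e))). apply HΓ, H0, Dx.
      - apply (proj2 (proj1 (tr_lem M α H _))). intros v ->; auto. }
    apply (proj1 (bot_lem M _) Hb w eq_refl).
  - apply (proj2 (proj1 (tr_lem M β H0 s))). intros w Hw.
    exfalso. apply (proj1 (proj2 (tr_lem M α H s)) (IHDer2 M s HΓ) w Hw).
    apply (proj1 (proj1 (tr_lem M α H s)) (IHDer1 M s HΓ) w Hw).
  - apply (IHDer M s HΓ).
  - apply (IHDer M s HΓ).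
  - apply (IHDer M s HΓ).
  - apply (IHDer M s HΓ).
  - apply (IHDer M s HΓ).
  - apply (IHDer M s HΓ).
  - apply (proj2 (bot_lem M s)), (IHDer M s HΓ).
  - exact (proj1 (bot_lem M s) (IHDer M s HΓ)).
  - exists s, (fun _ => False); split; [firstorder|split; [auto|]].
    apply empty_lem; auto.
  - exists s, s; split; [firstorder|split; auto].
  - destruct (IHDer M s HΓ) as (t & u & E & A & B). exists u, t; split; [firstorder|auto].
  -
    destruct (IHDer1 M s HΓ) as (t & u & E & A & B).
    assert (HD : forall r : W M -> Prop, (forall w, r w -> s w) -> forall x, Δ x -> supp M r x).
    { intros r Hr x Dx. apply (proj1 (down_lem M x (H0 x Dx) s r Hr)). apply HΓ, H, Dx. }
    apply (proj1 (union_lem M χ s t u E)).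
    + apply IHDer2. intros x [Dx| ->]; [apply HD; auto; intros w Hw; apply E; auto|auto].
    + apply IHDer3. intros x [Dx| ->]; [apply HD; auto; intros w Hw; apply E; auto|auto].
  - destruct (IHDer1 M s HΓ) as (t & u & E & A & B).
    exists t, u; split; [auto|split; [auto|]].
    apply IHDer2. intros x [Dx| ->]; [|auto].
    apply (proj1 (down_lem M x (H0 x Dx) s u (fun w Hw => proj2 (E w) (or_intror Hw)))).
    apply HΓ, H, Dx.
  - destruct (IHDer M s HΓ) as (t & u & E & A & B).
    assert (Eq : forall w, u w <-> s w).
    { intro w; split; [intro; apply E; auto|intro Hw; destruct (proj1 (E w) Hw) as [X|X]; [|auto]].
      exfalso; apply (proj1 (bot_lem M t) A w X). }
    apply (proj1 (ext_lem M φ u s Eq)); auto.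
  - destruct (IHDer M s HΓ) as (t & u & E & [A [w Hw]] & B).
    exfalso; apply (proj1 (bot_lem M t) A w Hw).
  - intros w Hw. destruct (IHDer2 M s HΓ w Hw) as (t & Ht & Rt & St).
    exists t; split; [auto|split; [auto|]]. apply IHDer1. intros x ->; auto.
  -
    intros w Hw. change (supp M (R M w) ψ). apply IHDer. intros φ Hφ.
    apply (H1 φ Hφ M s HΓ w Hw).
  - apply (IHDer M s HΓ).
  - apply (IHDer M s HΓ).
  - intros w Hw. destruct (IHDer M s HΓ w Hw) as (t & Ht & Rt & (t1 & u1 & E & A & B & Hn)).
    exists u1. split; [auto|split; [intros v Hv; apply Rt, E; auto|auto]].
  - intros w Hw. destruct (IHDer1 M s HΓ w Hw) as (t1 & [v1 H1] & R1 & S1).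
    destruct (IHDer2 M s HΓ w Hw) as (t2 & H2 & R2 & S2).
    exists (fun v => t1 v \/ t2 v). split; [eauto|split; [intros v [?|?]; auto|]].
    exists t1, t2; split; [firstorder|auto].
  - intros w Hw. destruct (IHDer M s HΓ w Hw) as [A B].
    exists (R M w); auto.
  - intros w Hw. change (supp M (R M w) (Or φ ψ)).
    pose proof (IHDer1 M s HΓ w Hw) as A. change (supp M (R M w) φ) in A.
    destruct (IHDer2 M s HΓ w Hw) as (t & Ht & Rt & St).
    exists (R M w), t; split; [firstorder|auto].
  - simpl. destruct (classic (exists w, s w)) as [H|H]; [left; auto|right; firstorder].
  - right; apply bot_lem, (IHDer M s HΓ).
  - left; apply (IHDer M s HΓ).
  - destruct (fill_lem M C ψ s (IHDer1 M s HΓ)) as [A|A].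
    + apply IHDer2; intros x [?| ->]; auto.
    + apply IHDer3; intros x [?| ->]; auto.
  - apply (IHDer M s HΓ).
  - apply (IHDer M s HΓ).
  -
    pose proof (IHDer M s HΓ) as HH.
    exists (fun w => s w /\ exists t, (exists v, t v) /\ (forall v, t v -> R M w v) /\ supp M t (fill C ψ)),
           (fun w => s w /\ exists t, (exists v, t v) /\ (forall v, t v -> R M w v) /\ supp M t (fill C Bot)).
    split; [|split; intros w [_ X]; exact X].
    intro w; split; [|tauto]. intro Hw.
    destruct (HH w Hw) as (t & Ht & Rt & St).
    destruct (fill_lem M C ψ t St); [left|right]; split; eauto.
  -
    pose proof (IHDer M s HΓ) as HH.
    exists (fun w => s w /\ supp M (R M w) (fill C ψ)),
           (fun w => s w /\ supp M (R M w) (fill C Bot)).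
    split; [|split; intros w [_ X]; exact X].
    intro w; split; [|tauto]. intro Hw.
    destruct (fill_lem M C ψ (R M w) (HH w Hw)); [left|right]; split; auto.
Qed.
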